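(* Let $\Sigma=\{a,b\}$ and let $A,B$ be positive integers. For $i$ in a finite index set $I$, let $Z_i=W_i+M_i\mathbb{N}^\Sigma$ be an $A,B$-frame. Let $v\in\mathbb{N}^\Sigma$. Then there exists $v'\in\mathbb{N}^\Sigma$ such that $\|v'\|=O\big((A+B)^{O(|I|)}\big)$ (with absolute implicit constants) and, for each $i\in I$, $v\in Z_i$ if and only if $v'\in Z_i$.
   Context: $[0..K]=\{0,1,\ldots,K\}$; $[0..B]^\Sigma_\Sigma$ is the set of $\Sigma\times\Sigma$ matrices with entries in $[0..B]$; for a matrix $M$ with columns $M^x$ and $\lambda\in\mathbb{N}^\Sigma$, $M\lambda=\sum_x\lambda_xM^x$, $M\mathbb{N}^\Sigma=\{M\lambda:\lambda\in\mathbb{N}^\Sigma\}$, and $W+X=\{w+x:w\in W,x\in X\}$. An $A,B$-frame is a set of the form $W+M\mathbb{N}^\Sigma$ with $W\subseteq[0..A]^\Sigma$ and $M\in[0..B]^\Sigma_\Sigma$. For $v\in\mathbb{Q}^\Sigma$, $\|v\|=\max_x|v(x)|$. *)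

(* Defs.v *)
From mathcomp Require Import all_boot all_order.
Set Implicit Arguments. Unset Strict Implicit. Unset Printing Implicit Defensive.

(* Alphabet Sigma = {a, b}, represented by 'I_2 (a = 0, b = 1). *)
Definition Sigma := 'I_2.

Definition vec := Sigma -> nat.

(* Sigma x Sigma matrices over nat; M y x is the entry in row y, column x,
   so the column M^x is (fun y => M y x). *)
Definition mat := Sigma -> Sigma -> nat.

Definition vnorm (v : vec) : nat := \max_(x : Sigma) v x.

Definition matvec (M : mat) (lam : vec) : vec :=
  fun y => \sum_(x : Sigma) lam x * M y x.

Definition in_frame (W : vec -> Prop) (M : mat) (v : vec) : Prop :=
  exists w, W w /\ exists lam : vec, forall y, v y = w y + matvec M lam y.

Definition is_AB_frame (A B : nat) (W : vec -> Prop) (M : mat) : Prop :=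
  (forall w, W w -> forall x, w x <= A) /\ (forall y x, M y x <= B).

(* Main.v *)
From Stdlib Require Import ZArith Lia Classical.
Require Import Defs.
Open Scope Z_scope.

Definition cr (a0 a1 b0 b1 : Z) := a0*b1 - a1*b0.
Definition memZ (WZ : Z -> Z -> Prop) (c0 c1 d0 d1 x0 x1 : Z) :=
  exists w0 w1 l0 l1, WZ w0 w1 /\ 0 <= l0 /\ 0 <= l1 /\
    x0 = w0 + l0*c0 + l1*d0 /\ x1 = w1 + l0*c1 + l1*d1.

Lemma prod_bnd a A c B : 0 <= a <= A -> 0 <= c <= B -> 0 <= a*c <= A*B.
Proof. intros. split; [nia|apply Z.mul_le_mono_nonneg; lia]. Qed.

Lemma crw_bnd a b c d A B : 0 <= a <= A -> 0 <= b <= A -> 0 <= c <= B -> 0 <= d <= B ->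
  Z.abs (a*d - b*c) <= A*B.
Proof. intros. pose proof (prod_bnd a A d B). pose proof (prod_bnd b A c B). lia. Qed.

Lemma coord_ok A B P l D E F mu t : 0 <= l -> D <> 0 -> l*D = E - F -> Z.abs F <= A*B ->
  mu*D = P*t -> Z.abs t <= B*B -> 0 < P -> (t = 0 \/ A*B + P*(B*B) < Z.abs E) ->
  0 <= l + mu /\ 0 <= l - mu.
Proof.
intros Hl HD HlD HF HmD Ht HP [Ht0|HE].
- subst t. rewrite Z.mul_0_r in HmD. apply Z.mul_eq_0 in HmD. lia.
- assert (H1 : P * (B*B) < Z.abs (l*D)) by lia.
  assert (H2 : Z.abs (mu*D) <= P*(B*B)).
  { rewrite HmD, Z.abs_mul, (Z.abs_eq P) by lia. apply Z.mul_le_mono_nonneg_l; lia. }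
  rewrite Z.abs_mul in H1, H2.
  assert (Z.abs mu < Z.abs l).
  { destruct (Z.lt_ge_cases (Z.abs mu) (Z.abs l)); auto.
    assert (Z.abs l * Z.abs D <= Z.abs mu * Z.abs D) by (apply Z.mul_le_mono_nonneg_r; lia). lia. }
  lia.
Qed.

Section CoreS.
Variables (A B P : Z) (WZ : Z -> Z -> Prop) (c0 c1 d0 d1 u0 u1 x0 x1 y0 y1 : Z).
Hypothesis HW : forall w0 w1, WZ w0 w1 -> 0 <= w0 <= A /\ 0 <= w1 <= A.
Hypotheses (Hc0 : 0 <= c0 <= B) (Hc1 : 0 <= c1 <= B) (Hd0 : 0 <= d0 <= B) (Hd1 : 0 <= d1 <= B)
  (Hu0 : 0 <= u0 <= B) (Hu1 : 0 <= u1 <= B) (HP : 0 < P) (HA : 0 <= A).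
Hypotheses (Hx0 : x0 = y0 + P*u0) (Hx1 : x1 = y1 + P*u1).
Let K2 := A*B + P*(B*B).

Lemma core_rank2 :
  cr c0 c1 d0 d1 <> 0 -> (cr c0 c1 d0 d1 | P) ->
  (cr u0 u1 c0 c1 <> 0 -> K2 < Z.abs (cr x0 x1 c0 c1) /\ K2 < Z.abs (cr y0 y1 c0 c1)) ->
  (cr u0 u1 d0 d1 <> 0 -> K2 < Z.abs (cr x0 x1 d0 d1) /\ K2 < Z.abs (cr y0 y1 d0 d1)) ->
  (memZ WZ c0 c1 d0 d1 x0 x1 <-> memZ WZ c0 c1 d0 d1 y0 y1).
Proof.
intros HD [q Hq] Hgc Hgd.
set (D := cr c0 c1 d0 d1) in *.
set (mu0 := q*(u0*d1 - u1*d0)). set (mu1 := q*(c0*u1 - c1*u0)).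
assert (Hpu0 : P*u0 = mu0*c0 + mu1*d0) by (rewrite Hq; unfold mu0, mu1, D, cr; ring).
assert (Hpu1 : P*u1 = mu0*c1 + mu1*d1) by (rewrite Hq; unfold mu0, mu1, D, cr; ring).
assert (Hm0 : mu0 * D = P * (u0*d1 - u1*d0)) by (rewrite Hq; unfold mu0; ring).
assert (Hm1 : mu1 * D = P * (c0*u1 - c1*u0)) by (rewrite Hq; unfold mu1; ring).
assert (Ht0 : Z.abs (u0*d1 - u1*d0) <= B*B) by (apply crw_bnd; lia).
assert (Ht1 : Z.abs (c0*u1 - c1*u0) <= B*B) by (apply crw_bnd; lia).
assert (Hgen : forall z0 z1, (z0 = x0 /\ z1 = x1) \/ (z0 = y0 /\ z1 = y1) ->
   forall w0 w1 l0 l1, WZ w0 w1 -> 0 <= l0 -> 0 <= l1 ->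
   z0 = w0 + l0*c0 + l1*d0 -> z1 = w1 + l0*c1 + l1*d1 ->
   (0 <= l0 + mu0 /\ 0 <= l0 - mu0) /\ (0 <= l1 + mu1 /\ 0 <= l1 - mu1)).
{ intros z0 z1 Hz w0 w1 l0 l1 HWw Hl0 Hl1 Ez0 Ez1. destruct (HW _ _ HWw) as [Hw0 Hw1]. split.
  - apply (coord_ok A B P l0 D (z0*d1 - z1*d0) (w0*d1 - w1*d0) mu0 (u0*d1 - u1*d0)); auto.
    + rewrite Ez0, Ez1. unfold D, cr. ring.
    + apply crw_bnd; lia.
    + destruct (Z.eq_dec (u0*d1 - u1*d0) 0) as [e|ne]; [left; exact e| right].
      destruct Hgd as [G1 G2]. { unfold cr; exact ne. }
      unfold K2, cr in *. destruct Hz as [[-> ->]|[-> ->]]; lia.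
  - apply (coord_ok A B P l1 D (z1*c0 - z0*c1) (w1*c0 - w0*c1) mu1 (c0*u1 - c1*u0)); auto.
    + rewrite Ez0, Ez1. unfold D, cr. ring.
    + apply crw_bnd; lia.
    + destruct (Z.eq_dec (c0*u1 - c1*u0) 0) as [e|ne]; [left; exact e| right].
      destruct Hgc as [G1 G2]. { unfold cr; lia. }
      unfold K2, cr in *. destruct Hz as [[-> ->]|[-> ->]]; lia. }
split.
- intros (w0 & w1 & l0 & l1 & HWw & Hl0 & Hl1 & E0 & E1).
  destruct (Hgen x0 x1 (or_introl (conj eq_refl eq_refl)) w0 w1 l0 l1) as [[_ A0] [_ A1]]; auto.
  exists w0, w1, (l0 - mu0), (l1 - mu1). repeat split; auto; nia.
- intros (w0 & w1 & l0 & l1 & HWw & Hl0 & Hl1 & E0 & E1).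
  destruct (Hgen y0 y1 (or_intror (conj eq_refl eq_refl)) w0 w1 l0 l1) as [[A0 _] [A1 _]]; auto.
  exists w0, w1, (l0 + mu0), (l1 + mu1). repeat split; auto; nia.
Qed.
End CoreS.

Lemma par_mu B P c0 c1 u0 u1 : 0 < P -> 0 <= c0 <= B -> 0 <= c1 <= B -> 0 <= u0 <= B -> 0 <= u1 <= B ->
  (c0 <> 0 \/ c1 <> 0) -> cr u0 u1 c0 c1 = 0 -> (c0 <> 0 -> (c0 | P)) -> (c1 <> 0 -> (c1 | P)) ->
  exists mu, 0 <= mu <= P*B /\ P*u0 = mu*c0 /\ P*u1 = mu*c1.
Proof.
unfold cr. intros HP Hc0 Hc1 Hu0 Hu1 Hnz Hcr D0 D1.
destruct (Z.eq_dec c0 0) as [e0|n0].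
- destruct Hnz as [H|H]; [lia|]. destruct (D1 H) as [k Hk].
  assert (0 < k) by nia.
  exists (k*u1). split; [split; nia|]. split; subst; nia.
- destruct (D0 n0) as [k Hk].
  assert (0 < k) by nia.
  exists (k*u0). split; [split; nia|]. split; subst; nia.
Qed.

Lemma col_case B P l c0 c1 u0 u1 : 0 < P -> 0 <= l -> 0 <= c0 <= B -> 0 <= c1 <= B -> 0 <= u0 <= B -> 0 <= u1 <= B ->
  ((c0 <> 0 \/ c1 <> 0) -> cr u0 u1 c0 c1 = 0) -> (c0 <> 0 -> (c0 | P)) -> (c1 <> 0 -> (c1 | P)) ->
  (exists mu, 0 <= mu <= l /\ P*u0 = mu*c0 /\ P*u1 = mu*c1) \/
  (0 <= l*c0 <= P*(B*B) /\ 0 <= l*c1 <= P*(B*B)).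
Proof.
intros HP Hl Hc0 Hc1 Hu0 Hu1 Hcr D0 D1.
destruct (classic (c0 <> 0 \/ c1 <> 0)) as [nz|z].
- destruct (par_mu B P c0 c1 u0 u1) as (mu & Hmu & E0 & E1); auto.
  destruct (Z_le_gt_dec mu l).
  + left. exists mu. repeat split; auto; lia.
  + right. split; split; try nia; rewrite Z.mul_assoc; apply Z.mul_le_mono_nonneg; lia.
- right. assert (c0 = 0 /\ c1 = 0) as [-> ->] by lia. lia.
Qed.

Section CoreR1.
Variables (A B P : Z) (WZ : Z -> Z -> Prop) (c0 c1 d0 d1 u0 u1 x0 x1 y0 y1 : Z).
Hypothesis HW : forall w0 w1, WZ w0 w1 -> 0 <= w0 <= A /\ 0 <= w1 <= A.
Hypotheses (Hc0 : 0 <= c0 <= B) (Hc1 : 0 <= c1 <= B) (Hd0 : 0 <= d0 <= B) (Hd1 : 0 <= d1 <= B)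
  (Hu0 : 0 <= u0 <= B) (Hu1 : 0 <= u1 <= B) (HP : 0 < P) (HA : 0 <= A).
Hypotheses (Hx0 : x0 = y0 + P*u0) (Hx1 : x1 = y1 + P*u1).
Hypotheses (Dc0 : c0 <> 0 -> (c0 | P)) (Dc1 : c1 <> 0 -> (c1 | P))
  (Dd0 : d0 <> 0 -> (d0 | P)) (Dd1 : d1 <> 0 -> (d1 | P)).
Let K2 := A*B + P*(B*B).
Hypothesis Hbx : A + 2*(P*(B*B)) < x0 \/ A + 2*(P*(B*B)) < x1.
Hypothesis Hby : A < y0 \/ A < y1.

Lemma nonmem z0 z1 : cr c0 c1 d0 d1 = 0 -> K2 < Z.abs (cr z0 z1 c0 c1) -> K2 < Z.abs (cr z0 z1 d0 d1) ->
  ~ memZ WZ c0 c1 d0 d1 z0 z1.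
Proof.
intros HD G1 G2 (w0 & w1 & l0 & l1 & HWw & Hl0 & Hl1 & E0 & E1).
destruct (HW _ _ HWw) as [Hw0 Hw1].
assert (cr z0 z1 c0 c1 = w0*c1 - w1*c0 + l1 * (- cr c0 c1 d0 d1)) by (rewrite E0, E1; unfold cr; ring).
assert (Z.abs (w0*c1 - w1*c0) <= A*B) by (apply crw_bnd; lia).
assert (0 <= P*(B*B)) by nia.
rewrite HD in H. unfold K2 in *. lia.
Qed.

Lemma nonmem' z0 z1 : cr c0 c1 d0 d1 = 0 -> K2 < Z.abs (cr z0 z1 d0 d1) ->
  ~ memZ WZ c0 c1 d0 d1 z0 z1.
Proof.
intros HD G2 (w0 & w1 & l0 & l1 & HWw & Hl0 & Hl1 & E0 & E1).
destruct (HW _ _ HWw) as [Hw0 Hw1].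
assert (cr z0 z1 d0 d1 = w0*d1 - w1*d0 + l0 * (cr c0 c1 d0 d1)) by (rewrite E0, E1; unfold cr; ring).
assert (Z.abs (w0*d1 - w1*d0) <= A*B) by (apply crw_bnd; lia).
assert (0 <= P*(B*B)) by nia.
rewrite HD in H. unfold K2 in *. lia.
Qed.

Lemma nonmemc z0 z1 : cr c0 c1 d0 d1 = 0 -> K2 < Z.abs (cr z0 z1 c0 c1) ->
  ~ memZ WZ c0 c1 d0 d1 z0 z1.
Proof.
intros HD G1 (w0 & w1 & l0 & l1 & HWw & Hl0 & Hl1 & E0 & E1).
destruct (HW _ _ HWw) as [Hw0 Hw1].
assert (cr z0 z1 c0 c1 = w0*c1 - w1*c0 + l1 * (- cr c0 c1 d0 d1)) by (rewrite E0, E1; unfold cr; ring).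
assert (Z.abs (w0*c1 - w1*c0) <= A*B) by (apply crw_bnd; lia).
assert (0 <= P*(B*B)) by nia.
rewrite HD in H. unfold K2 in *. lia.
Qed.

Lemma core_rank1 :
  cr c0 c1 d0 d1 = 0 ->
  ((c0 <> 0 \/ c1 <> 0) -> cr u0 u1 c0 c1 <> 0 -> K2 < Z.abs (cr x0 x1 c0 c1) /\ K2 < Z.abs (cr y0 y1 c0 c1)) ->
  ((d0 <> 0 \/ d1 <> 0) -> cr u0 u1 d0 d1 <> 0 -> K2 < Z.abs (cr x0 x1 d0 d1) /\ K2 < Z.abs (cr y0 y1 d0 d1)) ->
  (memZ WZ c0 c1 d0 d1 x0 x1 <-> memZ WZ c0 c1 d0 d1 y0 y1).
Proof.
intros HD Hgc Hgd.
destruct (classic ((c0 <> 0 \/ c1 <> 0) /\ cr u0 u1 c0 c1 <> 0)) as [[nz ne]|Nc].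
{ destruct (Hgc nz ne). split; intro H'; exfalso; [apply (nonmemc x0 x1)|apply (nonmemc y0 y1)]; auto. }
destruct (classic ((d0 <> 0 \/ d1 <> 0) /\ cr u0 u1 d0 d1 <> 0)) as [[nz ne]|Nd].
{ destruct (Hgd nz ne). split; intro H'; exfalso; [apply (nonmem' x0 x1)|apply (nonmem' y0 y1)]; auto. }
assert (Cc : (c0 <> 0 \/ c1 <> 0) -> cr u0 u1 c0 c1 = 0) by (intros; apply NNPP; tauto).
assert (Cd : (d0 <> 0 \/ d1 <> 0) -> cr u0 u1 d0 d1 = 0) by (intros; apply NNPP; tauto).
clear Hgc Hgd Nc Nd.
split.
- intros (w0 & w1 & l0 & l1 & HWw & Hl0 & Hl1 & E0 & E1).
  destruct (HW _ _ HWw) as [Hw0 Hw1].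
  destruct (col_case B P l0 c0 c1 u0 u1) as [(mu & Hmu & F0 & F1)|Bc]; auto.
  { exists w0, w1, (l0 - mu), l1. repeat split; auto; [lia| rewrite ?Z.mul_sub_distr_r, ?Z.mul_add_distr_r; lia ..]. }
  destruct (col_case B P l1 d0 d1 u0 u1) as [(mu & Hmu & F0 & F1)|Bd]; auto.
  { exists w0, w1, l0, (l1 - mu). repeat split; auto; [lia| rewrite ?Z.mul_sub_distr_r, ?Z.mul_add_distr_r; lia ..]. }
  exfalso. clear -Bc Bd E0 E1 Hbx Hw0 Hw1. lia.
- intros (w0 & w1 & l0 & l1 & HWw & Hl0 & Hl1 & E0 & E1).
  destruct (HW _ _ HWw) as [Hw0 Hw1].
  destruct (classic (c0 <> 0 \/ c1 <> 0)) as [nz|z].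
  { destruct (par_mu B P c0 c1 u0 u1) as (mu & Hmu & F0 & F1); auto.
    exists w0, w1, (l0 + mu), l1. repeat split; auto; [lia| rewrite ?Z.mul_sub_distr_r, ?Z.mul_add_distr_r; lia ..]. }
  destruct (classic (d0 <> 0 \/ d1 <> 0)) as [nz'|z'].
  { destruct (par_mu B P d0 d1 u0 u1) as (mu & Hmu & F0 & F1); auto.
    exists w0, w1, l0, (l1 + mu). repeat split; auto; [lia| rewrite ?Z.mul_sub_distr_r, ?Z.mul_add_distr_r; lia ..]. }
  exfalso. assert (c0 = 0 /\ c1 = 0 /\ d0 = 0 /\ d1 = 0) as (-> & -> & -> & ->) by lia. clear -E0 E1 Hby Hw0 Hw1. lia.
Qed.
End CoreR1.

Lemma core (A B P : Z) (WZ : Z -> Z -> Prop) (c0 c1 d0 d1 u0 u1 x0 x1 y0 y1 : Z) :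
  (forall w0 w1, WZ w0 w1 -> 0 <= w0 <= A /\ 0 <= w1 <= A) ->
  0 <= c0 <= B -> 0 <= c1 <= B -> 0 <= d0 <= B -> 0 <= d1 <= B ->
  0 <= u0 <= B -> 0 <= u1 <= B -> 0 < P -> 0 <= A ->
  x0 = y0 + P*u0 -> x1 = y1 + P*u1 ->
  (c0 <> 0 -> (c0 | P)) -> (c1 <> 0 -> (c1 | P)) ->
  (d0 <> 0 -> (d0 | P)) -> (d1 <> 0 -> (d1 | P)) ->
  (cr c0 c1 d0 d1 <> 0 -> (cr c0 c1 d0 d1 | P)) ->
  ((c0 <> 0 \/ c1 <> 0) -> cr u0 u1 c0 c1 <> 0 ->
     A*B + P*(B*B) < Z.abs (cr x0 x1 c0 c1) /\ A*B + P*(B*B) < Z.abs (cr y0 y1 c0 c1)) ->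
  ((d0 <> 0 \/ d1 <> 0) -> cr u0 u1 d0 d1 <> 0 ->
     A*B + P*(B*B) < Z.abs (cr x0 x1 d0 d1) /\ A*B + P*(B*B) < Z.abs (cr y0 y1 d0 d1)) ->
  (A + 2*(P*(B*B)) < x0 \/ A + 2*(P*(B*B)) < x1) ->
  (A < y0 \/ A < y1) ->
  (memZ WZ c0 c1 d0 d1 x0 x1 <-> memZ WZ c0 c1 d0 d1 y0 y1).
Proof.
intros HW Hc0 Hc1 Hd0 Hd1 Hu0 Hu1 HP HA Hx0 Hx1 Dc0 Dc1 Dd0 Dd1 DD Gc Gd Bx By.
destruct (Z.eq_dec (cr c0 c1 d0 d1) 0) as [e|ne].
- apply (core_rank1 A B P WZ c0 c1 d0 d1 u0 u1 x0 x1 y0 y1); auto.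
- apply (core_rank2 A B P WZ c0 c1 d0 d1 u0 u1 x0 x1 y0 y1); auto.
  + intros. apply Gc; auto. unfold cr in ne. destruct (Z.eq_dec c0 0); [right|left; auto].
    intro. subst. apply ne. ring.
  + intros. apply Gd; auto. unfold cr in ne. destruct (Z.eq_dec d0 0); [right|left; auto].
    intro. subst. apply ne. ring.
Qed.

Lemma good1 (B K K2 m0 m1 c0 c1 x0 x1 : Z) :
  0 <= m0 <= B -> 0 <= m1 <= B -> 0 <= c0 <= B -> 0 <= c1 <= B -> 0 <= x0 -> 0 <= x1 -> 0 <= K ->
  Z.abs (cr m0 m1 x0 x1) <= K -> cr m0 m1 c0 c1 <> 0 ->
  ((K2 + K) * B < x0 \/ (K2 + K) * B < x1) -> K2 < Z.abs (cr x0 x1 c0 c1).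
Proof.
intros Hm0 Hm1 Hc0 Hc1 Hx0 Hx1 HK Hn Hmc Hbig.
destruct (Z_lt_le_dec K2 (Z.abs (cr x0 x1 c0 c1))) as [h|h]; auto. exfalso.
assert (I0 : cr m0 m1 c0 c1 * x0 = cr x0 x1 c0 c1 * m0 + cr m0 m1 x0 x1 * c0) by (unfold cr; ring).
assert (I1 : cr m0 m1 c0 c1 * x1 = cr x0 x1 c0 c1 * m1 + cr m0 m1 x0 x1 * c1) by (unfold cr; ring).
set (e := cr m0 m1 c0 c1) in *. set (f := cr x0 x1 c0 c1) in *. set (g := cr m0 m1 x0 x1) in *.
assert (B0 : forall z, 0 <= z -> Z.abs (e * z) <= (K2 + K) * B -> z <= (K2 + K) * B).
{ intros z hz hb. rewrite Z.abs_mul in hb. assert (z <= Z.abs e * z) by nia. lia. }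
assert (forall a b, 0 <= a <= B -> 0 <= b <= B -> Z.abs (f*a + g*b) <= (K2 + K) * B).
{ intros a b ha hb. assert (Z.abs (f*a) <= K2 * B) by (rewrite Z.abs_mul; apply Z.mul_le_mono_nonneg; lia).
  assert (Z.abs (g*b) <= K * B) by (rewrite Z.abs_mul; apply Z.mul_le_mono_nonneg; lia). lia. }
destruct Hbig as [Hq|Hq].
- specialize (B0 x0 Hx0). rewrite I0 in B0. specialize (B0 (H m0 c0 Hm0 Hc0)). lia.
- specialize (B0 x1 Hx1). rewrite I1 in B0. specialize (B0 (H m1 c1 Hm1 Hc1)). lia.
Qed.

Lemma ashift (B P K m0 m1 x0 x1 : Z) : 1 <= B -> 0 <= P -> 0 <= m0 <= B -> 0 <= m1 <= B -> 0 <= x1 ->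
  Z.abs (m0*x1 - m1*x0) <= K -> K + P*(B*B) + P*B < x0 -> P*m0 <= x0 /\ P*m1 <= x1.
Proof.
intros HB HP Hm0 Hm1 Hx1 HK Hx0.
assert (P*m0 <= P*B) by (apply Z.mul_le_mono_nonneg_l; lia).
assert (0 <= P*(B*B)) by nia.
split; [lia|].
destruct (Z.eq_dec m1 0) as [->|n1]; [lia|].
assert (x0 <= m1*x0) by nia.
assert (P*(B*B) + P*B < m0*x1) by lia.
assert (m0*x1 <= B*x1) by nia.
assert (P*B < x1) by nia.
assert (P*m1 <= P*B) by (apply Z.mul_le_mono_nonneg_l; lia). lia.
Qed.

Close Scope Z_scope.
From mathcomp Require Import all_boot all_order zify.

Definition o0 : 'I_2 := ord0.
Definition o1 : 'I_2 := ord_max.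

Lemma I2P (y : 'I_2) : y = o0 \/ y = o1.
Proof. case: y => [[|[|n]] H]; [left|right|]; try by apply/val_inj. by []. Qed.

Lemma matvecE M lam y : matvec M lam y = (lam o0 * M y o0 + lam o1 * M y o1)%N.
Proof.
rewrite /matvec big_ord_recl big_ord1.
have -> : lift ord0 ord0 = o1 :> 'I_2 by apply/val_inj.
by [].
Qed.

Lemma vnormE v : vnorm v = maxn (v o0) (v o1).
Proof.
rewrite /vnorm big_ord_recr /= big_ord1.
by have -> : widen_ord (leqnSn 1) ord0 = o0 :> 'I_2 by apply/val_inj.
Qed.

Definition mkv (a b : nat) : vec := fun y => if val y == 0%N then a else b.

Definition WZ (W : vec -> Prop) (w0 w1 : Z) :=
  exists w, W w /\ w0 = Z.of_nat (w o0) /\ w1 = Z.of_nat (w o1).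

Lemma bridge W M v : in_frame W M v <->
  memZ (WZ W) (Z.of_nat (M o0 o0)) (Z.of_nat (M o1 o0)) (Z.of_nat (M o0 o1)) (Z.of_nat (M o1 o1))
    (Z.of_nat (v o0)) (Z.of_nat (v o1)).
Proof.
split.
- move=> [w [Hw [lam Hl]]].
  exists (Z.of_nat (w o0)), (Z.of_nat (w o1)), (Z.of_nat (lam o0)), (Z.of_nat (lam o1)).
  have h0 := Hl o0. have h1 := Hl o1. rewrite matvecE in h0. rewrite matvecE in h1.
  split; first by exists w. lia.
- move=> [w0 [w1 [l0 [l1 [[w [Hw [-> ->]]] [Hl0 [Hl1 [E0 E1]]]]]]]].
  have e0 : l0 = Z.of_nat (Z.to_nat l0) by rewrite Z2Nat.id.
  have e1 : l1 = Z.of_nat (Z.to_nat l1) by rewrite Z2Nat.id.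
  move: (Z.to_nat l0) (Z.to_nat l1) e0 e1 => n0 n1 e0 e1. subst l0 l1.
  exists w; split => //. exists (mkv n0 n1) => y.
  case: (I2P y) => ->; rewrite matvecE /mkv /=; lia.
Qed.

Lemma dvd_Z (a b : nat) : (a %| b)%N -> (Z.of_nat a | Z.of_nat b)%Z.
Proof. move/dvdnP => [k ->]. exists (Z.of_nat k). lia. Qed.

Section Step.
Variables (A B : nat) (I : finType) (W : I -> vec -> Prop) (M : I -> mat) (P : nat).
Hypotheses (HA : (0 < A)%N) (HB : (0 < B)%N) (HF : forall i, is_AB_frame A B (W i) (M i)) (HP : (0 < P)%N).
Hypothesis Hdive : forall i (j k : 'I_2), M i k j <> 0%N -> (M i k j %| P)%N.
Definition col i (j k : 'I_2) : Z := Z.of_nat (M i k j).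
Hypothesis HdivD : forall i, cr (col i o0 o0) (col i o0 o1) (col i o1 o0) (col i o1 o1) <> 0%Z ->
  (cr (col i o0 o0) (col i o0 o1) (col i o1 o0) (col i o1 o1) | Z.of_nat P)%Z.

Definition AZ := Z.of_nat A.
Definition BZ := Z.of_nat B.
Definition PZ := Z.of_nat P.
Definition K2 := (AZ*BZ + PZ*(BZ*BZ))%Z.
Definition K := (K2 + PZ*BZ)%Z.
Definition T := ((K2 + K)*BZ)%Z.
Definition NZ := (T + K + AZ + 3*(PZ*(BZ*BZ)) + PZ*BZ + PZ)%Z.

Lemma col_bnd i j k : (0 <= col i j k <= BZ)%Z.
Proof. rewrite /col /BZ. have [_ h] := HF i. have := h k j. lia. Qed.

Lemma col_dvd i j k : col i j k <> 0%Z -> (col i j k | PZ)%Z.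
Proof. rewrite /col /PZ => h. apply: dvd_Z. apply: Hdive. lia. Qed.

Lemma frame_iff i (u0 u1 : nat) (v v' : vec) :
  (u0 <= B)%N -> (u1 <= B)%N ->
  Z.of_nat (v o0) = (Z.of_nat (v' o0) + PZ * Z.of_nat u0)%Z ->
  Z.of_nat (v o1) = (Z.of_nat (v' o1) + PZ * Z.of_nat u1)%Z ->
  (forall j : 'I_2, (col i j o0 <> 0 \/ col i j o1 <> 0)%Z ->
     cr (Z.of_nat u0) (Z.of_nat u1) (col i j o0) (col i j o1) <> 0%Z ->
     (K2 < Z.abs (cr (Z.of_nat (v o0)) (Z.of_nat (v o1)) (col i j o0) (col i j o1)))%Z /\
     (K2 < Z.abs (cr (Z.of_nat (v' o0)) (Z.of_nat (v' o1)) (col i j o0) (col i j o1)))%Z) ->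
  (AZ + 2*(PZ*(BZ*BZ)) < Z.of_nat (v o0) \/ AZ + 2*(PZ*(BZ*BZ)) < Z.of_nat (v o1))%Z ->
  (AZ < Z.of_nat (v' o0) \/ AZ < Z.of_nat (v' o1))%Z ->
  in_frame (W i) (M i) v <-> in_frame (W i) (M i) v'.
Proof.
move=> hu0 hu1 e0 e1 G Bx By.
rewrite !bridge.
have := col_bnd i. have := col_dvd i. rewrite /col => cd cb.
apply: (core AZ BZ PZ _ _ _ _ _ (Z.of_nat u0) (Z.of_nat u1)) => //; try by apply: cb.
- move=> w0 w1 [w [Hw [-> ->]]]. have [h _] := HF i. have := h w Hw o0. have := h w Hw o1.
  rewrite /AZ. lia.
- rewrite /BZ; lia.
- rewrite /BZ; lia.
- rewrite /PZ; lia.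
- rewrite /AZ; lia.
- by apply: cd.
- by apply: cd.
- by apply: cd.
- by apply: cd.
- by apply: HdivD.
- exact: (G o0).
- exact: (G o1).
Qed.

Lemma shift_ok (v : vec) (u0 u1 : nat) :
  (u0 <= B)%N -> (u1 <= B)%N -> (P*u0 <= v o0)%N -> (P*u1 <= v o1)%N -> (0 < u0 + u1)%N ->
  (forall i (j : 'I_2), (col i j o0 <> 0 \/ col i j o1 <> 0)%Z ->
     cr (Z.of_nat u0) (Z.of_nat u1) (col i j o0) (col i j o1) <> 0%Z ->
     (K2 < Z.abs (cr (Z.of_nat (v o0)) (Z.of_nat (v o1)) (col i j o0) (col i j o1)))%Z /\
     (K2 < Z.abs (cr (Z.of_nat (v o0) - PZ * Z.of_nat u0) (Z.of_nat (v o1) - PZ * Z.of_nat u1)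
                      (col i j o0) (col i j o1)))%Z) ->
  (AZ + 2*(PZ*(BZ*BZ)) < Z.of_nat (v o0) \/ AZ + 2*(PZ*(BZ*BZ)) < Z.of_nat (v o1))%Z ->
  (AZ < Z.of_nat (v o0) - PZ * Z.of_nat u0 \/ AZ < Z.of_nat (v o1) - PZ * Z.of_nat u1)%Z ->
  exists v' : vec, (v' o0 + v' o1 < v o0 + v o1)%N /\
     forall i, in_frame (W i) (M i) v <-> in_frame (W i) (M i) v'.
Proof.
move=> hu0 hu1 h0 h1 hpos G Bx By.
have e0 : Z.of_nat (mkv (v o0 - P*u0) (v o1 - P*u1) o0) = (Z.of_nat (v o0) - PZ * Z.of_nat u0)%Z
  by rewrite /mkv /= /PZ; lia.
have e1 : Z.of_nat (mkv (v o0 - P*u0) (v o1 - P*u1) o1) = (Z.of_nat (v o1) - PZ * Z.of_nat u1)%Z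
  by rewrite /mkv /= /PZ; lia.
exists (mkv (v o0 - P*u0) (v o1 - P*u1)); split.
- rewrite /mkv /=. have : (0 < P*u0 + P*u1)%N by rewrite -mulnDr muln_gt0 HP. lia.
- move=> i. apply: (frame_iff i u0 u1) => //; rewrite ?e0 ?e1; try lia.
  move=> j nz ne. exact: G.
Qed.

Lemma NZ_facts : (0 < AZ /\ 1 <= BZ /\ 1 <= PZ /\ 0 <= K2 /\ 0 <= PZ*(BZ*BZ) /\ 0 <= T /\ PZ <= PZ*BZ)%Z.
Proof.
rewrite /T /K /K2 /AZ /BZ /PZ.
have h1 : (0 < Z.of_nat A)%Z by lia.
have h2 : (1 <= Z.of_nat B)%Z by lia.
have h3 : (1 <= Z.of_nat P)%Z by lia.
have h4 : (0 <= Z.of_nat A * Z.of_nat B)%Z by nia.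
have h5 : (0 <= Z.of_nat P * (Z.of_nat B * Z.of_nat B))%Z by nia.
have h6 : (Z.of_nat P <= Z.of_nat P * Z.of_nat B)%Z by nia.
split; first lia. split; first lia. split; first lia. split; first lia. split; first lia.
split; last lia. apply: Z.mul_nonneg_nonneg; lia.
Qed.

Lemma step (v : vec) : (NZ < Z.of_nat (v o0) \/ NZ < Z.of_nat (v o1))%Z ->
  exists v' : vec, (v' o0 + v' o1 < v o0 + v o1)%N /\
     forall i, in_frame (W i) (M i) v <-> in_frame (W i) (M i) v'.
Proof.
move=> Hbig.
have [fA [fB [fP [fK2 [fPBB [fT fPB]]]]]] := NZ_facts.
have Hx0 : (0 <= Z.of_nat (v o0))%Z by lia.
have Hx1 : (0 <= Z.of_nat (v o1))%Z by lia.
move: Hbig Hx0 Hx1. set x0 := Z.of_nat (v o0). set x1 := Z.of_nat (v o1). move=> Hbig Hx0 Hx1.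
have HN : (NZ = T + K + AZ + 3*(PZ*(BZ*BZ)) + PZ*BZ + PZ)%Z by [].
have HK : (K = K2 + PZ*BZ)%Z by [].
have HT : (T = (K2 + K)*BZ)%Z by [].
case: (classic (exists i (j : 'I_2), (col i j o0 <> 0 \/ col i j o1 <> 0)%Z /\
   (Z.abs (cr (col i j o0) (col i j o1) x0 x1) <= K)%Z)) => [[i [j [nz hK]]] | nK].
- have cb := col_bnd i j.
  have m0b := cb o0. have m1b := cb o1.
  have [a0 a1] : (PZ * col i j o0 <= x0 /\ PZ * col i j o1 <= x1)%Z.
  { case: Hbig => hb.
    - apply (ashift BZ PZ K (col i j o0) (col i j o1) x0 x1); try lia. move: hK; rewrite /cr. move=> hK. exact hK.
    - have [q1 q2] : (PZ * col i j o1 <= x1 /\ PZ * col i j o0 <= x0)%Z.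
      { apply: (ashift BZ PZ K) => //; try lia. move: hK. rewrite /cr. lia. }
      by split. }
  have pm0 : (PZ * col i j o0 <= PZ*BZ)%Z by apply: Z.mul_le_mono_nonneg_l; lia.
  have pm1 : (PZ * col i j o1 <= PZ*BZ)%Z by apply: Z.mul_le_mono_nonneg_l; lia.
  have [Hm0 Hm1] := HF i. 
  apply: (shift_ok v (M i o0 j) (M i o1 j)).
  + exact: Hm1.
  + exact: Hm1.
  + move: a0. rewrite /col /PZ /x0. lia.
  + move: a1. rewrite /col /PZ /x1. lia.
  + move: nz. rewrite /col. lia.
  + move=> i' j' nz' ne'. have cb' := col_bnd i' j'.
    have ne'' : cr (col i j o0) (col i j o1) (col i' j' o0) (col i' j' o1) <> 0%Z by [].
    split.
    * apply: (good1 BZ K K2 (col i j o0) (col i j o1)) => //; try apply: cb'; lia.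
    * apply: (good1 BZ K K2 (col i j o0) (col i j o1)) => //; try apply: cb'; try lia.
      -- move: a0; rewrite /col; lia.
      -- move: a1; rewrite /col; lia.
      -- have -> : cr (col i j o0) (col i j o1) (x0 - PZ * Z.of_nat (M i o0 j)) (x1 - PZ * Z.of_nat (M i o1 j))
                  = cr (col i j o0) (col i j o1) x0 x1 by rewrite /cr /col; ring.
         exact: hK.
      -- rewrite /col in pm0 pm1. lia.
  + lia.
  + rewrite /col in a0 a1 pm0 pm1. lia.
- have G0 : forall i (j : 'I_2), (col i j o0 <> 0 \/ col i j o1 <> 0)%Z ->
     (K < Z.abs (cr x0 x1 (col i j o0) (col i j o1)))%Z.
  { move=> i j nz. case: (Z_lt_le_dec K (Z.abs (cr x0 x1 (col i j o0) (col i j o1)))) => // h.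
    exfalso. apply: nK. exists i, j. split => //. move: h. rewrite /cr. lia. }
  case: Hbig => hb.
  + have hv : (P * 1 <= v o0)%N. { have : (PZ < x0)%Z by lia. rewrite /PZ /x0. lia. }
    have q1 : (AZ + 2 * (PZ * (BZ * BZ)) < x0)%Z by lia.
    have q2 : (AZ < x0 - PZ * Z.of_nat 1)%Z by lia.
    apply: (shift_ok v 1 0) => //; try lia.
    move=> i j nz ne. have := G0 i j nz. have cb := col_bnd i j. have c0b := cb o0. have c1b := cb o1.
    have : (PZ * col i j o1 <= PZ*BZ)%Z by apply: Z.mul_le_mono_nonneg_l; lia.
    rewrite /cr. move=> h1 h2. split; first lia.
    have -> : ((x0 - PZ * Z.of_nat 1) * col i j o1 - (x1 - PZ * Z.of_nat 0) * col i j o0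
               = (x0 * col i j o1 - x1 * col i j o0) - PZ * col i j o1)%Z by ring.
    lia.
  + have hv : (P * 1 <= v o1)%N. { have : (PZ < x1)%Z by lia. rewrite /PZ /x1. lia. }
    have q1 : (AZ + 2 * (PZ * (BZ * BZ)) < x1)%Z by lia.
    have q2 : (AZ < x1 - PZ * Z.of_nat 1)%Z by lia.
    apply: (shift_ok v 0 1) => //; try lia.
    move=> i j nz ne. have := G0 i j nz. have cb := col_bnd i j. have c0b := cb o0. have c1b := cb o1.
    have : (PZ * col i j o0 <= PZ*BZ)%Z by apply: Z.mul_le_mono_nonneg_l; lia.
    rewrite /cr. move=> h1 h2. split; first lia.
    have -> : ((x0 - PZ * Z.of_nat 0) * col i j o1 - (x1 - PZ * Z.of_nat 1) * col i j o0
               = (x0 * col i j o1 - x1 * col i j o0) + PZ * col i j o0)%Z by ring.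
    lia.
Qed.

Definition Nn : nat :=
  ((A*B + P*(B*B)) + (A*B + P*(B*B) + P*B))*B + (A*B + P*(B*B) + P*B) + A + 3*(P*(B*B)) + P*B + P.

Lemma NnZ : Z.of_nat Nn = NZ.
Proof. rewrite /Nn /NZ /T /K /K2 /AZ /BZ /PZ. lia. Qed.

Lemma reduce n (v : vec) : (v o0 + v o1 <= n)%N ->
  exists v' : vec, (vnorm v' <= Nn)%N /\ forall i, in_frame (W i) (M i) v <-> in_frame (W i) (M i) v'.
Proof.
elim: n v => [|n IH] v hv.
- case: (leqP (vnorm v) Nn) => h.
  + by exists v; split.
  + have := step v. rewrite -NnZ. rewrite vnormE in h.
    case. { move: h. rewrite /maxn. case: ifP => _ h; [right|left]; lia. }
    move=> v' [hs _]. lia.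
- case: (leqP (vnorm v) Nn) => h.
  + by exists v; split.
  + have := step v. rewrite -NnZ. rewrite vnormE in h.
    case. { move: h. rewrite /maxn. case: ifP => _ h; [right|left]; lia. }
    move=> v' [hs Hv'].
    have [v'' [h1 h2]] := IH v' ltac:(lia).
    exists v''; split => // i. by rewrite Hv' h2.
Qed.
End Step.

Local Open Scope nat_scope.
Lemma mono3 x y z X : x <= X -> y <= X -> z <= X -> x*y*z <= X*X*X.
Proof. move=> hx hy hz. by rewrite !leq_mul. Qed.

Lemma Nn_bound A B P : (0 < A)%N -> (0 < B)%N -> (0 < P)%N -> (Nn A B P <= 20 * P * (A+B)^3)%N.
Proof.
move=> hA hB hP. set X := (A+B)%N.
have hAX : (A <= X)%N by rewrite /X leq_addr.
have hBX : (B <= X)%N by rewrite /X leq_addl.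
have h1X : (1 <= X)%N by apply: leq_trans hBX.
have e3 : (X^3 = X*X*X)%N by rewrite !expnS expn0 muln1 mulnA.
rewrite e3 /Nn.
have hX : X*X*X <= P*(X*X*X) by rewrite -{1}(mul1n (X*X*X)) leq_mul.
have m3 := @mono3 _ _ _ X.
have t1 : A*B*B <= P*(X*X*X) by apply: leq_trans hX; apply: m3.
have t3 : P*B*B*B <= P*(X*X*X).
{ have -> : P*B*B*B = P*(B*B*B) by rewrite !mulnA. apply: leq_mul => //. exact: m3. }
have t4 : P*B*B <= P*(X*X*X).
{ have -> : P*B*B = P*(B*B*1) by rewrite muln1 !mulnA. apply: leq_mul => //. exact: m3. }
have t5 : A*B <= P*(X*X*X).
{ apply: leq_trans hX. have -> : A*B = A*B*1 by rewrite muln1. exact: m3. }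
have t6 : P*B <= P*(X*X*X).
{ have -> : P*B = P*(B*1*1) by rewrite !muln1. apply: leq_mul => //. exact: m3. }
have t7 : A <= P*(X*X*X).
{ apply: leq_trans hX. have -> : A = A*1*1 by rewrite !muln1. exact: m3. }
have t8 : P <= P*(X*X*X).
{ apply: leq_trans t6. by rewrite leq_pmulr. }
have e1 : ((A * B + P * (B * B) + (A * B + P * (B * B) + P * B)) * B
   = A*B*B + P*B*B*B + A*B*B + P*B*B*B + P*B*B)%N by nia.
rewrite e1. have e2 : (P*(B*B) = P*B*B)%N by rewrite mulnA.
rewrite e2. lia.
Qed.

Lemma maxn1_id e : e <> 0 -> maxn 1 e = e.
Proof. move=> h. apply/maxn_idPr. lia. Qed.

Theorem lemma4 :
  exists c d : nat,
  forall (A B : nat), 0 < A -> 0 < B ->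
  forall (I : finType) (W : I -> vec -> Prop) (M : I -> mat),
    (forall i, is_AB_frame A B (W i) (M i)) ->
  forall v : vec,
  exists v' : vec,
    vnorm v' <= c * (A + B) ^ (d * #|I|) /\
    (forall i, in_frame (W i) (M i) v <-> in_frame (W i) (M i) v').
Proof.
exists 20, 9 => A B hA hB I W M HF v.
case: (posnP #|I|) => [I0|Ipos].
{ exists (mkv 0 0); split; first by rewrite vnormE /mkv /=.
  move=> i. exfalso. move: I0. by rewrite (cardD1 i) inE. }
pose absD i := ((M i o0 o0 * M i o1 o1 - M i o1 o0 * M i o0 o1) + (M i o1 o0 * M i o0 o1 - M i o0 o0 * M i o1 o1))%N.
pose p i := (maxn 1 (absD i) * (maxn 1 (M i o0 o0) * maxn 1 (M i o1 o0) * maxn 1 (M i o0 o1) * maxn 1 (M i o1 o1)))%N.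
pose P := (\prod_(i : I) p i)%N.
have pdvd : forall i, (p i %| P)%N by move=> i; rewrite /P (bigD1 i) //= dvdn_mulr.
have Ppos : (0 < P)%N by apply: prodn_gt0 => i; rewrite /p !muln_gt0 !leq_max.
have Hdive : forall i (j k : 'I_2), M i k j <> 0 -> (M i k j %| P)%N.
{ move=> i j k nz. apply: dvdn_trans (pdvd i). rewrite -{1}(maxn1_id _ nz) /p.
  case: (I2P j) => ->; case: (I2P k) => ->; apply: dvdn_mull.
  - apply: dvdn_mulr. apply: dvdn_mulr. apply: dvdn_mulr. exact: dvdnn.
  - apply: dvdn_mulr. apply: dvdn_mulr. apply: dvdn_mull. exact: dvdnn.
  - apply: dvdn_mulr. apply: dvdn_mull. exact: dvdnn.
  - apply: dvdn_mull. exact: dvdnn. }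
have HdivD : forall i, cr (col I M i o0 o0) (col I M i o0 o1) (col I M i o1 o0) (col I M i o1 o1) <> 0%Z ->
  (cr (col I M i o0 o0) (col I M i o0 o1) (col I M i o1 o0) (col I M i o1 o1) | Z.of_nat P)%Z.
{ move=> i. rewrite /col /cr => h.
  have e : Z.abs (Z.of_nat (M i o0 o0) * Z.of_nat (M i o1 o1) - Z.of_nat (M i o1 o0) * Z.of_nat (M i o0 o1))
           = Z.of_nat (absD i) by rewrite /absD; lia.
  apply/Z.divide_abs_l. rewrite e. apply: dvd_Z. apply: dvdn_trans (pdvd i).
  rewrite /p -{1}(@maxn1_id (absD i)); last by lia.
  exact: dvdn_mulr. }
have [v' [hv' Hiff]] := @reduce A B I W M P hA hB HF Ppos Hdive HdivD _ v (leqnn (v o0 + v o1)).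
exists v'; split => //.
have hPB : (P <= B ^ (6 * #|I|))%N.
{ rewrite expnM -prod_nat_const. apply: leq_prod => i _.
  have [_ hM] := HF i.
  have b1 : forall e, (e <= B)%N -> (maxn 1 e <= B)%N by move=> e he; rewrite geq_max hB he.
  have hx : (M i o0 o0 * M i o1 o1 <= B*B)%N by apply: leq_mul.
  have hy : (M i o1 o0 * M i o0 o1 <= B*B)%N by apply: leq_mul.
  have hBB : (1 <= B*B)%N by rewrite muln_gt0 hB.
  have ha : (maxn 1 (absD i) <= B*B)%N by rewrite geq_max hBB /absD; lia.
  rewrite /p. have -> : (B^6 = (B*B) * (B*B*B*B))%N by rewrite !expnS expn0 muln1 !mulnA.
  apply: leq_mul => //. rewrite !leq_mul //; apply: b1; apply: hM. }
apply: (leq_trans hv'). apply: (leq_trans (@Nn_bound A B P hA hB Ppos)).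
set X := (A + B)%N.
have hX : (0 < X)%N by rewrite /X addn_gt0 hA.
have hBX : (B ^ (6 * #|I|) <= X ^ (6 * #|I|))%N.
{ rewrite leq_exp2r; first by rewrite /X leq_addl. by rewrite muln_gt0 Ipos. }
rewrite -mulnA leq_mul //.
apply: (@leq_trans (X ^ (6 * #|I|) * X ^ 3)); first by rewrite leq_mul // (leq_trans hPB hBX).
rewrite -expnD. apply: leq_pexp2l => //. lia.
Qed.
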